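(* Let $d\ge1$ and $L\ge2$ be integers, $\Phi\in\mathbb{R}^{d\times d}$, and $W_1,\dots,W_L\in\mathbb{R}^{d\times d}$. Let $\mathcal{R}=\tfrac12\|W_{L:1}-\Phi\|_F^2$ and $D_l=W_{l+1}^\intercal W_{l+1}-W_lW_l^\intercal$ for $l=1,\dots,L-1$. Suppose there are $\alpha\ge 0$ and $\phi>0$ with $\|W_l\|_2\le\alpha$ for $l=1,\dots,L-1$ and $1\le\alpha^{2(L-1)}<L\phi^2$, and suppose $\|D_l\|_2\le\delta$ for $l=1,\dots,L-2$ and $\|I+D_{L-1}\|_2\le\varepsilon$, where $\delta\le(2L^3\phi^2)^{-1}$ and $\varepsilon\le(4L^2)^{-1}$. Then $$\|\nabla_L\mathcal{R}\|_F^2\ge\mathcal{R}.$$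
   Context: For $l_2\ge l_1$ write $W_{l_2:l_1}=W_{l_2}\cdots W_{l_1}$, empty products being the identity $I$. $\nabla_L\mathcal{R}=(W_{L:1}-\Phi)W_{L-1:1}^\intercal$ is the gradient of $\mathcal{R}(W_1,\dots,W_L)=\tfrac12\|W_L\cdots W_1-\Phi\|_F^2$ with respect to $W_L$. $\|\cdot\|_2$ is the spectral norm and $\|\cdot\|_F$ the Frobenius norm. *)

(* Defs.v *)
From HB Require Import structures.
From mathcomp Require Import all_boot all_order all_algebra.
From mathcomp Require Import all_classical all_reals.
Set Implicit Arguments. Unset Strict Implicit. Unset Printing Implicit Defensive.
Import Order.TTheory GRing.Theory Num.Theory.
Local Open Scope ring_scope.
Local Open Scope classical_set_scope.

Definition frob (R : realType) (m n : nat) (A : 'M[R]_(m, n)) : R :=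
  Num.sqrt (\sum_(i < m) \sum_(j < n) A i j ^+ 2).

Definition specnorm (R : realType) (m n : nat) (A : 'M[R]_(m, n)) : R :=
  sup [set frob (A *m v) | v in [set v : 'cV[R]_n | frob v = 1]].

Fixpoint mprod (R : realType) (d : nat) (W : nat -> 'M[R]_d) (l1 k : nat)
  : 'M[R]_d :=
  match k with
  | 0 => 1%:M
  | k'.+1 => W (l1 + k')%N *m mprod W l1 k'
  end.

(* W_{l2:l1} = W_l2 ... W_l1, the identity when l2 < l1. *)
Definition Wprod (R : realType) (d : nat) (W : nat -> 'M[R]_d) (l2 l1 : nat)
  : 'M[R]_d := mprod W l1 (l2.+1 - l1).

Definition risk (R : realType) (d L : nat) (W : nat -> 'M[R]_d) (Phi : 'M[R]_d)
  : R := 2^-1 * frob (Wprod W L 1 - Phi) ^+ 2.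

Definition gradL (R : realType) (d L : nat) (W : nat -> 'M[R]_d) (Phi : 'M[R]_d)
  : 'M[R]_d := (Wprod W L 1 - Phi) *m (Wprod W L.-1 1)^T.

Definition Dmat (R : realType) (d : nat) (W : nat -> 'M[R]_d) (l : nat)
  : 'M[R]_d := (W l.+1)^T *m W l.+1 - W l *m (W l)^T.

(* Main.v *)
Require Import Defs.
From HB Require Import structures.
From mathcomp Require Import all_boot all_order all_algebra.
From mathcomp Require Import all_classical all_reals.
Import Order.TTheory GRing.Theory Num.Theory.
Local Open Scope ring_scope.
From mathcomp Require Import ring lra.
Local Open Scope classical_set_scope.
Set Implicit Arguments. Unset Strict Implicit.
Section S.
Variable R : realType.
Variable d : nat.
Definition dot (u v : 'cV[R]_d) : R := (u^T *m v) 0 0.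
Definition n2 (v : 'cV[R]_d) : R := dot v v.

Lemma dotE u v : dot u v = \sum_i u i 0 * v i 0.
Proof. by rewrite /dot mxE; apply: eq_bigr => i _; rewrite mxE. Qed.

Lemma dotC u v : dot u v = dot v u.
Proof. by rewrite !dotE; apply: eq_bigr => i _; rewrite mulrC. Qed.

Lemma n2_ge0 v : 0 <= n2 v.
Proof. by rewrite /n2 dotE sumr_ge0 // => i _; rewrite -expr2 sqr_ge0. Qed.

Lemma n2_eq0 v : n2 v = 0 -> v = 0.
Proof.
rewrite /n2 dotE => /eqP; rewrite psumr_eq0; last by move=> i _; rewrite -expr2 sqr_ge0.
move=> /allP H; apply/matrixP => i j; rewrite ord1 mxE.
by have := H i (mem_index_enum _); rewrite -expr2 sqrf_eq0 => /eqP.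
Qed.

Lemma CS u v : dot u v ^+ 2 <= n2 u * n2 v.
Proof.
rewrite /n2 !dotE.
have H : 0 <= \sum_i \sum_j (u i 0 * v j 0 - u j 0 * v i 0) ^+ 2.
  by apply: sumr_ge0 => i _; apply: sumr_ge0 => j _; apply: sqr_ge0.
have E : \sum_i \sum_j (u i 0 * v j 0 - u j 0 * v i 0) ^+ 2 =
  2 * ((\sum_i u i 0 * u i 0) * (\sum_i v i 0 * v i 0)) - 2 * (\sum_i u i 0 * v i 0) ^+ 2.
  have e1 : forall i j, (u i 0 * v j 0 - u j 0 * v i 0) ^+ 2 =
     (u i 0 * u i 0) * (v j 0 * v j 0) + (u j 0 * u j 0) * (v i 0 * v i 0)
     - 2 * ((u i 0 * v i 0) * (u j 0 * v j 0)).
    by move=> i j; ring.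
  under eq_bigr => i _ do under eq_bigr => j _ do rewrite e1.
  have ds : forall f g : 'I_d -> R, \sum_i \sum_j f i * g j = (\sum_i f i) * (\sum_j g j).
    by move=> f g; rewrite mulr_suml; apply: eq_bigr => i _; rewrite mulr_sumr.
  have ->: \sum_i \sum_j (u i 0 * u i 0 * (v j 0 * v j 0) + u j 0 * u j 0 * (v i 0 * v i 0) -
      2 * (u i 0 * v i 0 * (u j 0 * v j 0))) =
      \sum_i \sum_j ((u i 0 * u i 0) * (v j 0 * v j 0)) + \sum_i \sum_j ((v i 0 * v i 0) * (u j 0 * u j 0))
      - 2 * \sum_i \sum_j ((u i 0 * v i 0) * (u j 0 * v j 0)).
    rewrite mulr_sumr -big_split -sumrB /=; apply: eq_bigr => i _.
    rewrite mulr_sumr -big_split -sumrB /=; apply: eq_bigr => j _; ring.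
  rewrite !ds; ring.
lra.
Qed.

Lemma frobE (v : 'cV[R]_d) : frob v = Num.sqrt (n2 v).
Proof.
rewrite /frob /n2 dotE; congr Num.sqrt; apply: eq_bigr => i _.
by rewrite big_ord1 expr2.
Qed.

Lemma dot_mul u (A : 'M[R]_d) v : dot u (A *m v) = dot (A^T *m u) v.
Proof. by rewrite /dot trmx_mul trmxK mulmxA. Qed.

Lemma n2_mul (A : 'M[R]_d) v : n2 (A *m v) = dot v ((A^T *m A) *m v).
Proof. by rewrite /n2 /dot trmx_mul !mulmxA. Qed.

Lemma dotDr u v w : dot u (v + w) = dot u v + dot u w.
Proof. by rewrite /dot mulmxDr mxE. Qed.
Lemma dotBr u v w : dot u (v - w) = dot u v - dot u w.
Proof. by rewrite /dot mulmxBr !mxE. Qed.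
Lemma dotZr u a v : dot u (a *: v) = a * dot u v.
Proof. by rewrite /dot -scalemxAr mxE. Qed.
Lemma n2Z a v : n2 (a *: v) = a ^+ 2 * n2 v.
Proof. by rewrite /n2 dotZr dotC dotZr mulrA expr2. Qed.

Lemma n2_bound (M : 'M[R]_d) v :
  n2 (M *m v) <= (\sum_i n2 ((row i M)^T)) * n2 v.
Proof.
rewrite [X in X <= _]/n2 dotE mulr_suml; apply: ler_sum => i _.
have -> : (M *m v) i 0 = dot ((row i M)^T) v.
  by rewrite dotE mxE; apply: eq_bigr => j _; rewrite !mxE.
by rewrite -expr2 CS.
Qed.

Lemma spec_bound (M : 'M[R]_d) (e : R) : (0 < d)%N -> specnorm M <= e ->
  0 <= e /\ forall v, n2 (M *m v) <= e ^+ 2 * n2 v.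
Proof.
move=> d0 hs.
set S := [set frob (M *m v) | v in [set v : 'cV[R]_d | frob v = 1]].
have ub : has_ubound S.
  exists (Num.sqrt (\sum_i n2 ((row i M)^T))) => x [v /= hv <-].
  rewrite frobE ler_sqrt; last by apply: sumr_ge0 => i _; exact: n2_ge0.
  have := n2_bound M v; rewrite frobE in hv.
  have -> : n2 v = 1 by rewrite -[n2 v]sqr_sqrtr ?n2_ge0 // hv expr1n.
  by rewrite mulr1.
have key : forall v : 'cV[R]_d, frob v = 1 -> frob (M *m v) <= e.
  move=> v hv; have h1 : frob (M *m v) <= specnorm M.
    rewrite /specnorm; apply: ub_le_sup => //; by exists v.
  exact: le_trans h1 hs.
have e0 : 0 <= e.
  pose v0 : 'cV[R]_d := delta_mx (Ordinal d0) 0.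
  have hv0 : frob v0 = 1.
    rewrite frobE /n2 dotE (bigD1 (Ordinal d0)) //= big1 ?addr0.
      by rewrite !mxE !eqxx mulr1 sqrtr1.
    by move=> i hi; rewrite !mxE (negbTE hi) mulr0.
  apply: le_trans (key _ hv0); rewrite frobE; exact: sqrtr_ge0.
split=> // v.
have [/n2_eq0 ->|nz] := eqVneq (n2 v) 0.
  by rewrite mulmx0 /n2 /dot mulmx0 mxE mulr0.
have np : 0 < n2 v by rewrite lt_def nz n2_ge0.
set s := Num.sqrt (n2 v).
have sp : 0 < s by rewrite sqrtr_gt0.
have ss : s ^+ 2 = n2 v by rewrite sqr_sqrtr // n2_ge0.
have hu : frob (s^-1 *: v) = 1.
  rewrite frobE n2Z exprVn ss mulVf ?sqrtr1 //.
have := key _ hu; rewrite frobE -scalemxAr n2Z => h.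
have t0 : 0 <= s^-1 ^+ 2 * n2 (M *m v) by rewrite mulr_ge0 ?n2_ge0 ?sqr_ge0.
have h2 : s^-1 ^+ 2 * n2 (M *m v) <= e ^+ 2.
  by rewrite -(sqr_sqrtr t0) lerXn2r ?nnegrE ?sqrtr_ge0.
have -> : n2 (M *m v) = s ^+ 2 * (s^-1 ^+ 2 * n2 (M *m v)).
  by rewrite mulrA -exprMn mulfV ?gt_eqF // expr1n mul1r.
by rewrite -ss mulrC ler_wpM2r ?sqr_ge0.
Qed.

Lemma spec_quad (M : 'M[R]_d) (e : R) : (0 < d)%N -> specnorm M <= e ->
  forall v, dot v (M *m v) <= e * n2 v.
Proof.
move=> d0 hs v; have [e0 h] := spec_bound d0 hs.
have c := CS v (M *m v); have hv := h v; have n0 := n2_ge0 v.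
have hh : dot v (M *m v) ^+ 2 <= (e * n2 v) ^+ 2.
  have -> : (e * n2 v) ^+ 2 = n2 v * (e ^+ 2 * n2 v) by ring.
  by apply: le_trans c _; apply: ler_wpM2l.
have en : 0 <= e * n2 v by rewrite mulr_ge0.
rewrite -(ger0_norm en); apply: le_trans (ler_norm _) _.
by rewrite -(ler_pXn2r (n:=2)) ?nnegrE ?normr_ge0 // !real_normK ?num_real // (ger0_norm en).
Qed.

Lemma n2_gt0 v : v != 0 -> 0 < n2 v.
Proof. by move=> nz; rewrite lt_def n2_ge0 andbT; apply/eqP => /n2_eq0 /eqP; apply/negP. Qed.

Lemma tr_lower (A : 'M[R]_d) (c : R) :
  (forall y, c * n2 y <= n2 (A^T *m y)) -> forall x, c * n2 x <= n2 (A *m x).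
Proof.
move=> H x; have [c0|cp] := lerP c 0.
  by apply: le_trans (n2_ge0 _); apply: mulr_le0_ge0 => //; exact: n2_ge0.
have uA : A \in unitmx.
  rewrite unitmxE unitfE; apply/negP => /det0P [v vn0 vA].
  have := H v^T; rewrite -trmx_mul vA trmx0.
  have -> : n2 0 = 0 by rewrite /n2 /dot mulmx0 mxE.
  have vt : v^T != 0 by apply: contra vn0 => /eqP h; apply/eqP; apply: trmx_inj; rewrite h trmx0.
  have := n2_gt0 vt; move=> p.
  by move=> h; have := mulr_gt0 cp p; rewrite ltNge h.
have uAt : A^T \in unitmx by rewrite unitmx_tr.
set C := invmx A^T.
have HC : forall z, c * n2 (C *m z) <= n2 z.
  by move=> z; have := H (C *m z); rewrite mulmxA mulmxV // mul1mx.
set w := A *m x.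
have xw : x = C^T *m w by rewrite /C -trmx_inv trmxK /w mulKmx.
have sE : n2 x = dot (C *m x) w.
  by rewrite /n2 {1}xw dotC dot_mul trmxK.
have cs := CS (C *m x) w; rewrite -sE in cs.
have hc := HC x.
have s0 := n2_ge0 x; have w0 := n2_ge0 w; have a0 := n2_ge0 (C *m x).
have [->|sp] := eqVneq (n2 x) 0; first by rewrite mulr0.
have sp' : 0 < n2 x by rewrite lt_def sp s0.
have h1 : c * n2 x ^+ 2 <= n2 x * n2 w.
  apply: le_trans (ler_wpM2l (ltW cp) cs) _.
  by rewrite mulrA ler_wpM2r.
rewrite -(ler_pM2l sp'); by rewrite mulrCA -expr2.
Qed.

Lemma prod_lower (A B : 'M[R]_d) (a b : R) : 0 <= a ->
  (forall x, a * n2 x <= n2 (A *m x)) -> (forall x, b * n2 x <= n2 (B *m x)) ->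
  forall x, a * b * n2 x <= n2 ((A *m B) *m x).
Proof.
move=> a0 hA hB x; rewrite -mulmxA; apply: le_trans (hA _).
by rewrite -mulrA ler_wpM2l.
Qed.
End S.

Local Close Scope classical_set_scope.

Theorem lemma6 (R : realType) (d L : nat) (Phi : 'M[R]_d) (W : nat -> 'M[R]_d)
  (alpha phi delta eps : R) :
  (1 <= d)%N -> (2 <= L)%N ->
  0 <= alpha -> 0 < phi ->
  (forall l, (1 <= l <= L.-1)%N -> specnorm (W l) <= alpha) ->
  1 <= alpha ^+ (2 * L.-1) -> alpha ^+ (2 * L.-1) < L%:R * phi ^+ 2 ->
  (forall l, (1 <= l <= L - 2)%N -> specnorm (Dmat W l) <= delta) ->
  specnorm (1%:M + Dmat W L.-1) <= eps ->
  delta <= (2 * L%:R ^+ 3 * phi ^+ 2)^-1 ->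
  eps <= (4 * L%:R ^+ 2)^-1 ->
  frob (gradL L W Phi) ^+ 2 >= risk L W Phi.
Proof.
move=> d0 L2 a0 phi0 _ a1 aL hD hE hdel heps.
case: L L2 a1 aL hD hE hdel heps => [|[|n]] // _ a1 aL hD hE hdel heps.
rewrite [(n.+2).-1]/= in a1 aL hE.
have {}hD : forall l, (1 <= l <= n)%N -> specnorm (Dmat W l) <= delta .
  by move=> l hl; apply: hD; rewrite subn2.
set dl := Num.max delta 0.
have dl0 : 0 <= dl by rewrite le_max lexx orbT.
have hD' : forall l, (1 <= l <= n)%N -> specnorm (Dmat W l) <= dl.
  by move=> l hl; apply: le_trans (hD l hl) _; rewrite le_max lexx.
have [e0 _] := spec_bound d0 hE.
set Lr := (n.+2)%:R : R.
have Lr2 : 2 <= Lr by rewrite /Lr (ler_nat R 2 n.+2).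
set P := Lr * phi ^+ 2.
have P1 : 1 < P by apply: le_lt_trans a1 aL.
have hdl : dl * (2 * Lr ^+ 2 * P) <= 1.
  have p0 : 0 < 2 * Lr ^+ 3 * phi ^+ 2 by rewrite !mulr_gt0 ?exprn_gt0 //; lra.
  have : dl <= (2 * Lr ^+ 3 * phi ^+ 2)^-1.
    by rewrite ge_max hdel /= invr_ge0 ltW.
  rewrite -[X in _ <= X]mul1r ler_pdivlMr // => h.
  by apply: le_trans h; rewrite /P le_eqVlt; apply/orP; left; apply/eqP; ring.
have he : eps * (4 * Lr ^+ 2) <= 1.
  have p0 : 0 < 4 * Lr ^+ 2 by rewrite !mulr_gt0 ?exprn_gt0 //; lra.
  by move: heps; rewrite -[X in _ <= X]mul1r ler_pdivlMr.
have dlL : Lr * dl * 4 <= 1.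
  have h1 : Lr * dl * 4 <= Lr * dl * (2 * Lr * P).
    apply: ler_wpM2l; first by apply: mulr_ge0 => //; lra.
    nra.
  apply: le_trans h1 _; apply: le_trans hdl; rewrite le_eqVlt; apply/orP; left; apply/eqP; ring.
have eL : Lr * eps * 8 <= 1.
  rewrite expr2 in he; nra.
have dlL2 : Lr ^+ 2 * dl * P * 2 <= 1.
  by apply: le_trans hdl; rewrite le_eqVlt; apply/orP; left; apply/eqP; ring.
set c := fun j : nat => 1 - eps - j%:R * dl.
have layer : forall j, (j <= n)%N -> forall x, c j * n2 x <= n2 (W (n.+1 - j)%N *m x).
  elim=> [|j IH] hj.
    rewrite subn0; apply: tr_lower => y; rewrite n2_mul trmxK.
    have -> : W n.+1 *m (W n.+1)^T = (W n.+2)^T *m W n.+2 + 1%:M - (1%:M + Dmat W n.+1).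
      by rewrite /Dmat opprD addrA addrK opprB addrC subrK.
    rewrite mulmxBl mulmxDl mul1mx dotBr dotDr -n2_mul.
    have := spec_quad d0 hE y; have := n2_ge0 (W n.+2 *m y).
    change (dot y y) with (n2 y); rewrite /c /= mul0r subr0; nra.
  have hl : (n.+1 - j = (n - j).+1)%N by rewrite subSn // ltnW.
  rewrite subSS; apply: tr_lower => y; rewrite n2_mul trmxK.
  have -> : W (n - j)%N *m (W (n - j)%N)^T = (W (n - j).+1)^T *m W (n - j).+1 - Dmat W (n - j).
    by rewrite /Dmat opprB addrC subrK.
  rewrite mulmxBl dotBr -n2_mul.
  have hq : (1 <= n - j <= n)%N by rewrite subn_gt0 hj leq_subr.
  have := spec_quad d0 (hD' _ hq) y; have := IH (ltnW hj) y; rewrite hl.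
  rewrite /c -natr1; nra.
have LrE : Lr = n%:R + 2 by rewrite /Lr -addn2 natrD.
set B := fun k : nat => 1 - k%:R * eps - dl * (k%:R * (2 * n%:R + 1 - k%:R)) / 2.
have prodl : forall k, (k <= n.+1)%N -> forall x, B k * n2 x <= n2 (mprod W 1 k *m x).
  elim=> [|k IH] hk x.
    have -> : B 0%N = 1 by rewrite /B !mul0r mulr0 !mul0r !subr0.
    by rewrite /= mul1mx mul1r.
  have hnk : (n - k <= n)%N by rewrite leq_subr.
  have kn : (k <= n)%N := hk.
  have e : (n.+1 - (n - k) = 1 + k)%N by rewrite subSn ?leq_subr // subKn // add1n.
  have kr0 : 0 <= k%:R :> R by rewrite ler0n.
  have knr : k%:R <= n%:R :> R by rewrite ler_nat.
  have nkE : (n - k)%:R = n%:R - k%:R :> R by rewrite natrB.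
  have c0 : 0 <= c (n - k)%N.
    rewrite /c nkE; have := dlL; have := eL; rewrite LrE => h1 h2.
    have p1 : 0 <= (k%:R + 2) * dl by apply: mulr_ge0 => //; lra.
    have p2 : 0 <= n%:R * eps by apply: mulr_ge0 => //; exact: ler0n.
    lra.
  have h := prod_lower c0 (layer _ hnk) (IH (ltnW hk)) x.
  rewrite e in h; rewrite /=; apply: le_trans h; apply: ler_wpM2r; first exact: n2_ge0.
  rewrite /B /c nkE -natr1.
  have ha0 : 0 <= eps + (n%:R - k%:R) * dl.
    by apply: addr_ge0 => //; apply: mulr_ge0 => //; lra.
  have b0 : 0 <= k%:R * eps + dl * (k%:R * (2 * n%:R + 1 - k%:R)) / 2.
    apply: addr_ge0; first exact: mulr_ge0.
    apply: mulr_ge0; last lra.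
    apply: mulr_ge0 => //; apply: mulr_ge0 => //; lra.
  have := mulr_ge0 ha0 b0.
  move=> ab.
  have key : (1 - eps - (n%:R - k%:R) * dl) * (1 - k%:R * eps - dl * (k%:R * (2 * n%:R + 1 - k%:R)) / 2) - (1 - (k%:R + 1) * eps - dl * ((k%:R + 1) * (2 * n%:R + 1 - (k%:R + 1))) / 2) = (eps + (n%:R - k%:R) * dl) * (k%:R * eps + dl * (k%:R * (2 * n%:R + 1 - k%:R)) / 2) by field.
  rewrite -subr_ge0 key; exact: ab.
have W1 := prodl n.+1 (leqnn _).
have Bh : 2^-1 <= B n.+1.
  have q : 0 <= Lr ^+ 2 * dl * 2 * (P - 1).
    apply: mulr_ge0; last lra.
    by apply: mulr_ge0 => //; apply: mulr_ge0 => //; apply: sqr_ge0.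
  have X : Lr ^+ 2 * dl * 2 <= 1 by lra.
  have nr0 : 0 <= n%:R :> R by rewrite ler0n.
  have q2 : 0 <= dl * (3 * n%:R + 4) by apply: mulr_ge0 => //; lra.
  have nS : n.+1%:R = n%:R + 1 :> R by rewrite natr1.
  move: X eL; rewrite /B nS LrE => X Y.
  lra.
have Wp : Wprod W (n.+2).-1 1 = mprod W 1 n.+1.
  rewrite /Wprod.

  by [].
rewrite /gradL /risk Wp.
set G := Wprod W n.+2 1 - Phi.
set Q := mprod W 1 n.+1 in W1 *.
clearbody G Q.
have fE : forall M : 'M[R]_d, frob M ^+ 2 = \sum_i \sum_j M i j ^+ 2.
  move=> M; rewrite /frob sqr_sqrtr //; apply: sumr_ge0 => i _; apply: sumr_ge0 => j _.
  exact: sqr_ge0.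
rewrite !fE mulr_sumr; apply: ler_sum => i _.
set g : 'cV[R]_d := (row i G)^T.
have e1 : \sum_j G i j ^+ 2 = n2 g.
  by rewrite /n2 dotE; apply: eq_bigr => j _; rewrite !mxE expr2.
have e2 : \sum_j (G *m Q^T) i j ^+ 2 = n2 (Q *m g).
  rewrite /n2 dotE; apply: eq_bigr => j _; rewrite expr2; congr (_ * _);
  by rewrite !mxE; apply: eq_bigr => k _; rewrite !mxE mulrC.

rewrite e1 e2.
have h1 := ler_wpM2r (n2_ge0 g) Bh.
have h2 := W1 g.

exact: le_trans h1 h2.
Qed.
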